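(* For every ordinal $\alpha$ and every closed $\mathcal L$-term $t$: $(\mathbb N,T^*_\alpha,P^*_\alpha)\not\models_{SK}\mathrm P\ulcorner\mathrm Pt\urcorner\vee\mathrm P\ulcorner\neg\mathrm Pt\urcorner$. In particular, $P_0^{*-}\cap P_\infty^{*+}=\emptyset$, where $(T^*_\infty,P^*_\infty)$ is the stage at which the modified sequence stabilizes.
   Context: Language. Let $\mathcal L_{\mathbb N}$ be the language of first-order Peano arithmetic and $\mathcal L=\mathcal L_{\mathbb N}\cup\{\mathrm T,\mathrm P\}$ with unary predicates $\mathrm T,\mathrm P$. $\mathcal L$-formulas are in Tait style: literals are $s=t$, $s\neq t$, $\mathrm Tt$, $\neg\mathrm Tt$, $\mathrm Pt$, $\neg\mathrm Pt$; formulas are built from literals by $\wedge,\vee,\forall,\exists$; negation of an arbitrary formula is defined by De Morgan dualities with $\neg\neg\varphi:=\varphi$. A standard Gödel numbering is fixed; $\#e$ is the code of $e$, $\ulcorner e\urcorner$ the numeral of $\#e$, $\mathrm{val}(t)$ the value of a closed term $t$, $\dot\neg$ the primitive recursive function with $\dot\neg(\#\varphi)=\#\neg\varphi$; $\mathrm T\varphi,\mathrm P\varphi$ abbreviate $\mathrm T\ulcorner\varphi\urcorner,\mathrm P\ulcorner\varphi\urcorner$. Semantics. A partial model is $(\mathbb N,T,P)$ with $\mathbb N$ the standard model and $T=(T^+,T^-)$, $P=(P^+,P^-)$ pairs of subsets of $\omega$. Strong Kleene satisfaction $\models_{SK}$: arithmetic literals evaluated in $\mathbb N$; $\mathrm Tt$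 satisfied iff $\mathrm{val}(t)\in T^+$, $\neg\mathrm Tt$ iff $\mathrm{val}(t)\in T^-$, likewise for $\mathrm P$ with $P^\pm$; conjunction iff both, disjunction iff at least one, $\forall x\varphi(x)$ iff all numeral instances, $\exists x\varphi(x)$ iff some numeral instance. Base paradoxicality. $\mathrm{PA}[\mathrm{SK}]$ is the two-sided sequent calculus for Strong Kleene logic with identity in $\mathcal L$ (initial sequents $\varphi\Rightarrow\varphi$, cut, weakening, the rule from $\Gamma\Rightarrow\Delta,\varphi$ infer $\neg\varphi,\Gamma\Rightarrow\Delta$, usual rules for $\wedge,\vee,\forall,\exists$, reflexivity $\Rightarrow t=t$, replacement from $\Gamma\Rightarrow\Delta,\varphi(t)$ infer $\Gamma\Rightarrow\Delta,s\neq t,\varphi(s)$) plus the initial sequents of Peano arithmetic and the induction rule for all $\mathcal L$-formulas. A sentence $\varphi$ is base paradoxical iff $\mathrm{PA}[\mathrm{SK}]$ derives $\varphi\Leftrightarrow\neg\mathrm T\varphi$ and $\neg\varphi\Leftrightarrow\mathrm T\varphi$ ($\Leftrightarrow$ meaning both sequents). $B(x)$ is an $\mathcal L_{\mathbb N}$-formula defining in $\mathbb N$ the set of codes of base paradoxical sentences, and $\Pi(x):=B(x)\vee B(\dot\neg x)$. Paradoxicality clauses. Let $\mathscr P(x)$ be the $\mathcal L$-formula which is the disjunction of: (1) $x$ codes a sentence and $\Pi(x)$; (2) $x$ codes a sentence $\mathrm Tt$ ($t$ a closed term) and $\mathrm P(\mathrm{val}(t))$; (3) $x$ codes a sentence $\neg\mathrm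 Tt$ and $\mathrm P(\mathrm{val}(t))$; (4) $x$ codes a sentence $\psi\wedge\theta$ and $(\mathrm P\psi\wedge\mathrm P\theta)\vee(\mathrm T\psi\wedge\mathrm P\theta)\vee(\mathrm T\theta\wedge\mathrm P\psi)$; (5) $x$ codes a sentence $\psi\vee\theta$ and $(\mathrm P\psi\wedge\mathrm P\theta)\vee(\neg\mathrm T\psi\wedge\mathrm P\theta)\vee(\neg\mathrm T\theta\wedge\mathrm P\psi)$; (6) $x$ codes a sentence $\forall v\psi$ and $\exists y\,\mathrm P\psi(\dot y)\wedge\forall y(\mathrm P\psi(\dot y)\vee\mathrm T\psi(\dot y))$; (7) $x$ codes a sentence $\exists v\psi$ and $\exists y\,\mathrm P\psi(\dot y)\wedge\forall y(\mathrm P\psi(\dot y)\vee\neg\mathrm T\psi(\dot y))$; here $\psi(\dot y)$ is the code of the result of substituting the numeral of $y$ for $v$. Write $\mathscr P(\varphi)$ for $\mathscr P(\ulcorner\varphi\urcorner)$. Modified sequence. Let $P_0^{*-}$ be the set of codes of the sentences $\mathrm P\ulcorner\varphi\urcorner$ for $\varphi$ an $\mathcal L$-formula. Define $\Gamma^*_{\mathscr{TP}}(T,P)=\big((\{\#\varphi:(\mathbb N,T,P)\models_{SK}\varphi\},\{\#\varphi:(\mathbb N,T,P)\models_{SK}\neg\varphi\}),(\{\#\varphi:(\mathbb N,T,P)\models_{SK}\mathscr P(\varphi)\},\{\#\varphi:(\mathbb N,T,P)\models_{SK}\varphi\vee\neg\varphi\}\cup P_0^{*-})\big)$, $\varphi$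 ranging over $\mathcal L$-sentences. Define $(T^*_0,P^*_0)=((\emptyset,\emptyset),(\emptyset,P_0^{*-}))$, $(T^*_{\xi+1},P^*_{\xi+1})=\Gamma^*_{\mathscr{TP}}(T^*_\xi,P^*_\xi)$, and $(T^*_\lambda,P^*_\lambda)=\bigcup_{\xi<\lambda}(T^*_\xi,P^*_\xi)$ (componentwise union) for limit $\lambda$; this monotone sequence reaches a least fixed point $(T^*_\infty,P^*_\infty)$ with $P^*_\infty=(P_\infty^{*+},P_\infty^{*-})$. *)

(* Defs.v *)
From mathcomp Require Import ssreflect ssrfun ssrbool eqtype ssrnat seq choice.
From Stdlib Require List.

Set Implicit Arguments.
Unset Strict Implicit.
Unset Printing Implicit Defensive.

(* Syntax of L = L_N u {T, P}, Tait style                              *)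

Inductive term : Type :=
| Var  of nat
| Zero
| Succ of term
| Plus of term & term
| Mult of term & term.

Inductive form : Type :=
| Eq   of term & term
| Neq  of term & term
| Tr   of term
| NTr  of term
| Pr   of term
| NPr  of term
| And  of form & form
| Or   of form & form
| All  of nat & form
| Ex   of nat & form.

Fixpoint neg (f : form) : form :=
  match f with
  | Eq s t => Neq s t | Neq s t => Eq s t
  | Tr t => NTr t | NTr t => Tr t
  | Pr t => NPr t | NPr t => Pr t
  | And a b => Or (neg a) (neg b)
  | Or a b => And (neg a) (neg b)
  | All v a => Ex v (neg a)
  | Ex v a => All v (neg a)
  end.

Fixpoint fvt (t : term) : seq nat :=
  match t with
  | Var n => [:: n]
  | Zero => [::]
  | Succ s => fvt s
  | Plus a b => fvt a ++ fvt b
  | Mult a b => fvt a ++ fvt b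
  end.

Fixpoint fv (f : form) : seq nat :=
  match f with
  | Eq s t | Neq s t => fvt s ++ fvt t
  | Tr t | NTr t | Pr t | NPr t => fvt t
  | And a b | Or a b => fv a ++ fv b
  | All v a | Ex v a => [seq y <- fv a | y != v]
  end.

Definition closed_term (t : term) : Prop := fvt t = [::].
Definition sentence (f : form) : Prop := fv f = [::].

Fixpoint subst_t (x : nat) (s t : term) : term :=
  match t with
  | Var n => if n == x then s else Var n
  | Zero => Zero
  | Succ u => Succ (subst_t x s u)
  | Plus a b => Plus (subst_t x s a) (subst_t x s b)
  | Mult a b => Mult (subst_t x s a) (subst_t x s b)
  end.

Fixpoint subst (x : nat) (s : term) (f : form) : form :=
  match f with
  | Eq a b => Eq (subst_t x s a) (subst_t x s b)
  | Neq a b => Neq (subst_t x s a) (subst_t x s b)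
  | Tr t => Tr (subst_t x s t)
  | NTr t => NTr (subst_t x s t)
  | Pr t => Pr (subst_t x s t)
  | NPr t => NPr (subst_t x s t)
  | And a b => And (subst x s a) (subst x s b)
  | Or a b => Or (subst x s a) (subst x s b)
  | All v a => if v == x then All v a else All v (subst x s a)
  | Ex v a => if v == x then Ex v a else Ex v (subst x s a)
  end.

Fixpoint free_for (x : nat) (s : term) (f : form) : bool :=
  match f with
  | And a b | Or a b => free_for x s a && free_for x s b
  | All v a | Ex v a =>
      (x \notin fv f) || ((v \notin fvt s) && free_for x s a)
  | _ => true
  end.

Definition num (n : nat) : term := iter n Succ Zero.

Fixpoint val (t : term) : nat :=
  match t with
  | Var _ => 0
  | Zero => 0
  | Succ s => (val s).+1
  | Plus a b => val a + val b
  | Mult a b => val a * val b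
  end.

Fixpoint tree_t (t : term) : GenTree.tree nat :=
  match t with
  | Var n => GenTree.Leaf n
  | Zero => GenTree.Node 0 [::]
  | Succ s => GenTree.Node 1 [:: tree_t s]
  | Plus a b => GenTree.Node 2 [:: tree_t a; tree_t b]
  | Mult a b => GenTree.Node 3 [:: tree_t a; tree_t b]
  end.

Fixpoint tree_f (f : form) : GenTree.tree nat :=
  match f with
  | Eq a b => GenTree.Node 10 [:: tree_t a; tree_t b]
  | Neq a b => GenTree.Node 11 [:: tree_t a; tree_t b]
  | Tr t => GenTree.Node 12 [:: tree_t t]
  | NTr t => GenTree.Node 13 [:: tree_t t]
  | Pr t => GenTree.Node 14 [:: tree_t t]
  | NPr t => GenTree.Node 15 [:: tree_t t]
  | And a b => GenTree.Node 16 [:: tree_f a; tree_f b]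
  | Or a b => GenTree.Node 17 [:: tree_f a; tree_f b]
  | All v a => GenTree.Node 18 [:: GenTree.Leaf v; tree_f a]
  | Ex v a => GenTree.Node 19 [:: GenTree.Leaf v; tree_f a]
  end.

Definition code (f : form) : nat := pickle (tree_f f).
Definition gq (f : form) : term := num (code f).

Record model : Type := Model {
  Tpos : nat -> Prop; Tneg : nat -> Prop;
  Ppos : nat -> Prop; Pneg : nat -> Prop }.

Inductive sat (M : model) : form -> Prop :=
| sat_eq  s t : val s = val t -> sat M (Eq s t)
| sat_neq s t : val s <> val t -> sat M (Neq s t)
| sat_T   t : Tpos M (val t) -> sat M (Tr t)
| sat_NT  t : Tneg M (val t) -> sat M (NTr t)
| sat_P   t : Ppos M (val t) -> sat M (Pr t)
| sat_NP  t : Pneg M (val t) -> sat M (NPr t)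
| sat_and a b : sat M a -> sat M b -> sat M (And a b)
| sat_orl a b : sat M a -> sat M (Or a b)
| sat_orr a b : sat M b -> sat M (Or a b)
| sat_all v a : (forall n, sat M (subst v (num n) a)) -> sat M (All v a)
| sat_ex  v a n : sat M (subst v (num n) a) -> sat M (Ex v a).

Definition sub_ctx (G G' : seq form) : Prop :=
  forall f, List.In f G -> List.In f G'.

Definition not_free_in (y : nat) (G : seq form) : Prop :=
  forall f, List.In f G -> y \notin fv f.

Inductive PAsk : seq form -> seq form -> Prop :=
| ax_id f : PAsk [:: f] [:: f]
| r_cut G D f : PAsk G (f :: D) -> PAsk (f :: G) D -> PAsk G D
| r_weak G D G' D' : PAsk G D -> sub_ctx G G' -> sub_ctx D D' -> PAsk G' D'
| r_neg G D f : PAsk G (f :: D) -> PAsk (neg f :: G) D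
| r_andL G D a b : PAsk (a :: b :: G) D -> PAsk (And a b :: G) D
| r_andR G D a b : PAsk G (a :: D) -> PAsk G (b :: D) -> PAsk G (And a b :: D)
| r_orL G D a b : PAsk (a :: G) D -> PAsk (b :: G) D -> PAsk (Or a b :: G) D
| r_orR G D a b : PAsk G (a :: b :: D) -> PAsk G (Or a b :: D)
| r_allL G D v a t : free_for v t a ->
    PAsk (subst v t a :: G) D -> PAsk (All v a :: G) D
| r_allR G D v a y : free_for v (Var y) a ->
    not_free_in y (All v a :: G ++ D) ->
    PAsk G (subst v (Var y) a :: D) -> PAsk G (All v a :: D)
| r_exL G D v a y : free_for v (Var y) a ->
    not_free_in y (Ex v a :: G ++ D) ->
    PAsk (subst v (Var y) a :: G) D -> PAsk (Ex v a :: G) D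
| r_exR G D v a t : free_for v t a ->
    PAsk G (subst v t a :: D) -> PAsk G (Ex v a :: D)
| r_refl t : PAsk [::] [:: Eq t t]
| r_repl G D v a s t : free_for v s a -> free_for v t a ->
    PAsk G (subst v t a :: D) -> PAsk G (Neq s t :: subst v s a :: D)
| pa_succ0 s : PAsk [::] [:: Neq (Succ s) Zero]
| pa_succinj s t : PAsk [:: Eq (Succ s) (Succ t)] [:: Eq s t]
| pa_plus0 s : PAsk [::] [:: Eq (Plus s Zero) s]
| pa_plusS s t : PAsk [::] [:: Eq (Plus s (Succ t)) (Succ (Plus s t))]
| pa_mult0 s : PAsk [::] [:: Eq (Mult s Zero) Zero]
| pa_multS s t : PAsk [::] [:: Eq (Mult s (Succ t)) (Plus (Mult s t) s)]
| r_ind G D x a t : not_free_in x (G ++ D) ->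
    free_for x (Succ (Var x)) a -> free_for x t a ->
    PAsk (a :: G) (subst x (Succ (Var x)) a :: D) ->
    PAsk (subst x Zero a :: G) (subst x t a :: D).

Definition PAsk_iff (f g : form) : Prop := PAsk [:: f] [:: g] /\ PAsk [:: g] [:: f].

Definition base_paradoxical (f : form) : Prop :=
  sentence f /\
  PAsk_iff f (neg (Tr (gq f))) /\ PAsk_iff (neg f) (Tr (gq f)).

Definition Bset (x : nat) : Prop :=
  exists f, x = code f /\ base_paradoxical f.

Definition dneg_rel (x y : nat) : Prop := exists f, x = code f /\ y = code (neg f).

Definition Pi (x : nat) : Prop := Bset x \/ exists y, dneg_rel x y /\ Bset y.

(* SK truth conditions of the L-formula  scriptP(x)  at x in (N,T,P)   *)

Definition scrP_sat (M : model) (x : nat) : Prop :=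
  (exists f, sentence f /\ x = code f /\ Pi x)
  \/ (exists t, closed_term t /\ x = code (Tr t) /\ Ppos M (val t))
  \/ (exists t, closed_term t /\ x = code (NTr t) /\ Ppos M (val t))
  \/ (exists a b, sentence (And a b) /\ x = code (And a b) /\
       ((Ppos M (code a) /\ Ppos M (code b)) \/
        (Tpos M (code a) /\ Ppos M (code b)) \/
        (Tpos M (code b) /\ Ppos M (code a))))
  \/ (exists a b, sentence (Or a b) /\ x = code (Or a b) /\
       ((Ppos M (code a) /\ Ppos M (code b)) \/
        (Tneg M (code a) /\ Ppos M (code b)) \/
        (Tneg M (code b) /\ Ppos M (code a))))
  \/ (exists v a, sentence (All v a) /\ x = code (All v a) /\
       (exists y, Ppos M (code (subst v (num y) a))) /\
       (forall y, Ppos M (code (subst v (num y) a)) \/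
                  Tpos M (code (subst v (num y) a))))
  \/ (exists v a, sentence (Ex v a) /\ x = code (Ex v a) /\
       (exists y, Ppos M (code (subst v (num y) a))) /\
       (forall y, Ppos M (code (subst v (num y) a)) \/
                  Tneg M (code (subst v (num y) a)))).

Definition P0neg (n : nat) : Prop := exists f, n = code (Pr (gq f)).

Definition GammaStar (M : model) : model :=
  Model
    (fun n => exists f, sentence f /\ n = code f /\ sat M f)
    (fun n => exists f, sentence f /\ n = code f /\ sat M (neg f))
    (fun n => exists f, sentence f /\ n = code f /\ scrP_sat M (code f))
    (fun n => (exists f, sentence f /\ n = code f /\ sat M (Or f (neg f)))
              \/ P0neg n).

Definition M0 : model := Model (fun _ => False) (fun _ => False)
                               (fun _ => False) P0neg.

Definition meq (M N : model) : Prop :=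
  (forall n, Tpos M n <-> Tpos N n) /\ (forall n, Tneg M n <-> Tneg N n) /\
  (forall n, Ppos M n <-> Ppos N n) /\ (forall n, Pneg M n <-> Pneg N n).

Definition union_below (A : Type) (lt : A -> A -> Prop) (S : A -> model) (a : A)
  : model :=
  Model (fun n => exists b, lt b a /\ Tpos (S b) n)
        (fun n => exists b, lt b a /\ Tneg (S b) n)
        (fun n => exists b, lt b a /\ Ppos (S b) n)
        (fun n => exists b, lt b a /\ Pneg (S b) n).

(* (A, lt) is a well-order, i.e. (isomorphic to) an ordinal *)
Definition well_order (A : Type) (lt : A -> A -> Prop) : Prop :=
  well_founded lt /\ (forall a b c, lt a b -> lt b c -> lt a c) /\
  (forall a b, lt a b \/ a = b \/ lt b a).

Definition modified_sequence (A : Type) (lt : A -> A -> Prop) (S : A -> model)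
  : Prop :=
  (forall a, (forall b, ~ lt b a) -> meq (S a) M0) /\
  (forall a b, lt b a -> (forall c, ~ (lt b c /\ lt c a)) ->
     meq (S a) (GammaStar (S b))) /\
  (forall a, (exists b, lt b a) ->
     (forall b, lt b a -> exists c, lt b c /\ lt c a) ->
     meq (S a) (union_below lt S a)).

(* Main.v *)
From Stdlib Require Import Classical.
Require Import Defs.
From mathcomp Require Import ssreflect ssrfun ssrbool eqtype ssrnat seq choice.

Fixpoint tv (e : nat -> nat) (t : term) : nat :=
  match t with
  | Var n => e n
  | Zero => 0
  | Succ s => (tv e s).+1
  | Plus a b => tv e a + tv e b
  | Mult a b => tv e a * tv e b
  end.

Definition upd (e : nat -> nat) (x n : nat) : nat -> nat :=
  fun y => if y == x then n else e y.

Fixpoint ev (bT bP : Prop) (e : nat -> nat) (f : form) : Prop :=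
  match f with
  | Eq s t => tv e s = tv e t
  | Neq s t => tv e s <> tv e t
  | Tr _ => bT
  | NTr _ => ~ bT
  | Pr _ => bP
  | NPr _ => ~ bP
  | And a b => ev bT bP e a /\ ev bT bP e b
  | Or a b => ev bT bP e a \/ ev bT bP e b
  | All v a => forall n, ev bT bP (upd e v n) a
  | Ex v a => exists n, ev bT bP (upd e v n) a
  end.

Lemma ev_neg bT bP f e : ev bT bP e (neg f) <-> ~ ev bT bP e f.
Proof.
elim: f e => [s t|s t|t|t|t|t|a IHa b IHb|a IHa b IHb|v a IHa|v a IHa] e /=;
  try tauto; try (split; [tauto | exact: NNPP]).
- rewrite IHa IHb; tauto.
- rewrite IHa IHb; tauto.
- split.
    move=> [n Hn] H; exact: ((IHa _).1 Hn (H n)).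
  move=> H; apply: NNPP => H'; apply: H => n; apply: NNPP => Hn; apply: H'; exists n.
  exact: ((IHa _).2 Hn).
- split.
    move=> Hn [n H]; exact: (IHa _).1 (Hn n) H.
  move=> H n; apply: ((IHa _).2) => Hn; apply: H; by exists n.
Qed.

Lemma tv_ext e e' t : (forall y, y \in fvt t -> e y = e' y) -> tv e t = tv e' t.
Proof.
elim: t => [n|| s IH|a IHa b IHb|a IHa b IHb] /= H.
- by apply: H; rewrite inE.
- by [].
- by rewrite IH.
- by rewrite IHa ?IHb // => y Hy; apply: H; rewrite mem_cat Hy ?orbT.
- by rewrite IHa ?IHb // => y Hy; apply: H; rewrite mem_cat Hy ?orbT.
Qed.

Lemma ev_ext bT bP f e e' : (forall y, y \in fv f -> e y = e' y) ->
  (ev bT bP e f <-> ev bT bP e' f).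
Proof.
elim: f e e' => [s t|s t|t|t|t|t|a IHa b IHb|a IHa b IHb|v a IHa|v a IHa] e e' /= H;
  try tauto.
- have E1 : tv e s = tv e' s by apply: tv_ext => y Hy; apply: H; rewrite mem_cat Hy.
  have E2 : tv e t = tv e' t by apply: tv_ext => y Hy; apply: H; rewrite mem_cat Hy orbT.
  by rewrite E1 E2.
- have E1 : tv e s = tv e' s by apply: tv_ext => y Hy; apply: H; rewrite mem_cat Hy.
  have E2 : tv e t = tv e' t by apply: tv_ext => y Hy; apply: H; rewrite mem_cat Hy orbT.
  by rewrite E1 E2.
- rewrite (IHa e e') ?(IHb e e') // => y Hy; by apply: H; rewrite mem_cat Hy ?orbT.
- rewrite (IHa e e') ?(IHb e e') // => y Hy; by apply: H; rewrite mem_cat Hy ?orbT.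
- have E : forall n y, y \in fv a -> upd e v n y = upd e' v n y.
    move=> n y Hy; rewrite /upd; case: eqP => // /eqP Hne.
    by apply: H; rewrite mem_filter Hne Hy.
  split=> K n; [exact/(IHa _ _ (E n))|exact/(IHa _ _ (E n))].
- have E : forall n y, y \in fv a -> upd e v n y = upd e' v n y.
    move=> n y Hy; rewrite /upd; case: eqP => // /eqP Hne.
    by apply: H; rewrite mem_filter Hne Hy.
  split=> -[n K]; exists n; [exact/(IHa _ _ (E n))|exact/(IHa _ _ (E n))].
Qed.

Lemma ev_eqf bT bP f e e' : (forall y, e y = e' y) ->
  (ev bT bP e f <-> ev bT bP e' f).
Proof. by move=> H; apply: ev_ext => y _; apply: H. Qed.

Lemma ev_eqf1 bT bP f e e' : (forall y, e y = e' y) ->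
  ev bT bP e f -> ev bT bP e' f.
Proof. by move=> H; apply: (ev_eqf _ _ _ _ _ H).1. Qed.

Lemma ev_ext1 bT bP f e e' : (forall y, y \in fv f -> e y = e' y) ->
  ev bT bP e f -> ev bT bP e' f.
Proof. by move=> H; apply: (ev_ext _ _ _ _ _ H).1. Qed.

Lemma subst_t_tv e x s t : tv e (subst_t x s t) = tv (upd e x (tv e s)) t.
Proof.
elim: t => [n|| u IH|a IHa b IHb|a IHa b IHb] //=; try by rewrite ?IH ?IHa ?IHb.
by rewrite /upd; case: eqP.
Qed.

Lemma subst_t_nofree x s t : x \notin fvt t -> subst_t x s t = t.
Proof.
elim: t => [n|| u IH|a IHa b IHb|a IHa b IHb] //=.
- by rewrite inE eq_sym => /negbTE ->.
- by move=> H; rewrite IH.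
- by rewrite mem_cat negb_or => /andP[H1 H2]; rewrite IHa ?IHb.
- by rewrite mem_cat negb_or => /andP[H1 H2]; rewrite IHa ?IHb.
Qed.

Lemma subst_nofree x s f : x \notin fv f -> subst x s f = f.
Proof.
elim: f => [a b|a b|t|t|t|t|a IHa b IHb|a IHa b IHb|v a IHa|v a IHa] /= H1.
- by move: H1; rewrite mem_cat negb_or => /andP[H1 H2]; rewrite !subst_t_nofree.
- by move: H1; rewrite mem_cat negb_or => /andP[H1 H2]; rewrite !subst_t_nofree.
- by rewrite subst_t_nofree.
- by rewrite subst_t_nofree.
- by rewrite subst_t_nofree.
- by rewrite subst_t_nofree.
- by move: H1; rewrite mem_cat negb_or => /andP[H1 H2]; rewrite IHa ?IHb.
- by move: H1; rewrite mem_cat negb_or => /andP[H1 H2]; rewrite IHa ?IHb.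
- have [->|Hne] := eqVneq v x; first by [].
  rewrite IHa //; apply: contra H1 => Hx; by rewrite mem_filter eq_sym Hne.
- have [->|Hne] := eqVneq v x; first by [].
  rewrite IHa //; apply: contra H1 => Hx; by rewrite mem_filter eq_sym Hne.
Qed.

Lemma upd_upd_ne e x y n m z : x != y ->
  upd (upd e x n) y m z = upd (upd e y m) x n z.
Proof.
rewrite /upd => Hne; have [->|Hzy] := eqVneq z y.
  by rewrite eq_sym (negbTE Hne).
by [].
Qed.

Lemma upd_upd e x n m z : upd (upd e x n) x m z = upd e x m z.
Proof. by rewrite /upd; case: eqP. Qed.

Lemma upd_same e x n z : x != z -> upd e x n z = e z.
Proof. by rewrite /upd eq_sym => /negbTE ->. Qed.

Lemma ev_subst bT bP x s f e : free_for x s f ->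
  (ev bT bP e (subst x s f) <-> ev bT bP (upd e x (tv e s)) f).
Proof.
elim: f e => [a b|a b|t|t|t|t|a IHa b IHb|a IHa b IHb|v a IHa|v a IHa] e /=;
  rewrite ?subst_t_tv //.
- by move=> /andP[H1 H2]; rewrite IHa // IHb.
- by move=> /andP[H1 H2]; rewrite IHa // IHb.
- have [Evx|Hne] := eqVneq v x.
    move=> _; subst v; split=> K n; apply: ev_eqf1 (K n) => z;
      by rewrite upd_upd.
  case/orP.
    move=> Hx; rewrite subst_nofree; last by apply: contra Hx => Hx; rewrite mem_filter Hx eq_sym Hne.
    apply: ev_ext => z Hz; rewrite /upd; case: eqP => // Ez; subst z.
    by rewrite Hz in Hx.
  move=> /andP[Hv Hff]; split=> K n.
    have := (IHa (upd e v n) Hff).1 (K n).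
    have -> : tv (upd e v n) s = tv e s.
      apply: tv_ext => z Hz; apply: upd_same; apply: contra Hv => /eqP ->; done.
    by apply: ev_eqf1 => z; rewrite upd_upd_ne.
  apply: (IHa (upd e v n) Hff).2.
  have -> : tv (upd e v n) s = tv e s.
    apply: tv_ext => z Hz; apply: upd_same; apply: contra Hv => /eqP ->; done.
  apply: ev_eqf1 (K n) => z; by rewrite upd_upd_ne // eq_sym.
- have [Evx|Hne] := eqVneq v x.
    move=> _; subst v; split=> -[n K]; exists n; apply: ev_eqf1 K => z;
      by rewrite upd_upd.
  case/orP.
    move=> Hx; rewrite subst_nofree; last by apply: contra Hx => Hx; rewrite mem_filter Hx eq_sym Hne.
    apply: ev_ext => z Hz; rewrite /upd; case: eqP => // Ez; subst z.
    by rewrite Hz in Hx.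
  move=> /andP[Hv Hff]; split=> -[n K]; exists n.
    have := (IHa (upd e v n) Hff).1 K.
    have -> : tv (upd e v n) s = tv e s.
      apply: tv_ext => z Hz; apply: upd_same; apply: contra Hv => /eqP ->; done.
    by apply: ev_eqf1 => z; rewrite upd_upd_ne.
  apply: (IHa (upd e v n) Hff).2.
  have -> : tv (upd e v n) s = tv e s.
    apply: tv_ext => z Hz; apply: upd_same; apply: contra Hv => /eqP ->; done.
  apply: ev_eqf1 K => z; by rewrite upd_upd_ne // eq_sym.
Qed.

Lemma free_for_closed x s f : fvt s = [::] -> free_for x s f.
Proof.
move=> Hs; elim: f => //= [a IHa b IHb|a IHa b IHb|v a IHa|v a IHa];
  by rewrite ?IHa ?IHb ?Hs ?orbT.
Qed.

Definition valid bT bP (G D : seq form) : Prop :=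
  forall e, (forall f, List.In f G -> ev bT bP e f) ->
    exists2 f, List.In f D & ev bT bP e f.

Lemma nf_ev bT bP y n e g : y \notin fv g ->
  (ev bT bP (upd e y n) g <-> ev bT bP e g).
Proof.
move=> Hy; apply: ev_ext => z Hz; apply: upd_same.
by apply: contra Hy => /eqP ->.
Qed.

Lemma soundness bT bP G D : PAsk G D -> valid bT bP G D.
Proof.
elim=> {G D}.
- move=> f e H; exists f; first by left. by apply: H; left.
- move=> G D f _ IH1 _ IH2 e HG.
  case: (IH1 e HG) => g [<-|Hg] Hev; last by exists g.
  apply: IH2 => h [<-|Hh] //; exact: HG.
- move=> G D G' D' _ IH sG sD e HG.
  case: (IH e (fun f Hf => HG f (sG f Hf))) => g Hg Hev; exists g => //; exact: sD.
- move=> G D f _ IH e HG.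
  have Hn := (ev_neg _ _ _ _).1 (HG _ (or_introl erefl)).
  case: (IH e (fun g Hg => HG g (or_intror Hg))) => g [<-|Hg] Hev; last by exists g.
  by case: Hn.
- move=> G D a b _ IH e HG.
  have [Ha Hb] := HG _ (or_introl erefl).
  apply: IH => g [<-|[<-|Hg]] //; apply: HG; by right.
- move=> G D a b _ IH1 _ IH2 e HG.
  case: (IH1 e HG) => g [<-|Hg] Hev; last by exists g => //; right.
  case: (IH2 e HG) => h [<-|Hh] Hev'; last by exists h => //; right.
  by eexists; [left; reflexivity | split].
- move=> G D a b _ IH1 _ IH2 e HG.
  case: (HG _ (or_introl erefl)) => Hab.
    apply: IH1 => g [<-|Hg] //; apply: HG; by right.
  apply: IH2 => g [<-|Hg] //; apply: HG; by right.
- move=> G D a b _ IH e HG.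
  case: (IH e HG) => g [<-|[<-|Hg]] Hev; last by exists g => //; right.
  + by eexists; [left; reflexivity | left].
  + by eexists; [left; reflexivity | right].
- move=> G D v a t Hff _ IH e HG.
  apply: IH => g [<-|Hg]; last by apply: HG; right.
  apply/ev_subst => //; exact: (HG _ (or_introl erefl)).
- move=> G D v a y Hff Hnf _ IH e HG.
  apply: NNPP => ND.
  have HyG : forall g, List.In g G -> y \notin fv g.
    move=> g Hg; apply: Hnf; right; apply: List.in_or_app; by left.
  have HyD : forall g, List.In g D -> y \notin fv g.
    move=> g Hg; apply: Hnf; right; apply: List.in_or_app; by right.
  have Hya : y \notin fv (All v a) by apply: Hnf; left.
  apply: (ND); exists (All v a); first by left.
  move=> n.
  case: (IH (upd e y n)).
    by move=> g Hg; apply/nf_ev; [exact: HyG | exact: HG].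
  move=> g [<-|Hg] Hev.
    move/ev_subst: Hev => /(_ Hff) /=.
    apply: ev_ext1 => z Hz; rewrite /upd eqxx; case: eqP => // /eqP Hzv.
    case: eqP => // Ezy; subst z; move: Hya => /=.
    by rewrite mem_filter Hzv Hz.
  by case: ND; exists g; [right | apply: (nf_ev bT bP y n e g (HyD g Hg)).1].
- move=> G D v a y Hff Hnf _ IH e HG.
  have HyG : forall g, List.In g G -> y \notin fv g.
    move=> g Hg; apply: Hnf; right; apply: List.in_or_app; by left.
  have HyD : forall g, List.In g D -> y \notin fv g.
    move=> g Hg; apply: Hnf; right; apply: List.in_or_app; by right.
  have Hya : y \notin fv (Ex v a) by apply: Hnf; left.
  case: (HG _ (or_introl erefl)) => n Hn.
  case: (IH (upd e y n)).
    move=> g [<-|Hg].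
      apply/ev_subst => //=.
      move: Hn; apply: ev_ext1 => z Hz; rewrite /upd eqxx; case: eqP => // /eqP Hzv.
      case: eqP => // Ezy; subst z; move: Hya => /=.
      by rewrite mem_filter Hzv Hz.
    by apply/nf_ev; [exact: HyG | apply: HG; right].
  move=> g Hg Hev; exists g => //; exact: (nf_ev bT bP y n e g (HyD g Hg)).1 Hev.
- move=> G D v a t Hff _ IH e HG.
  case: (IH e HG) => g [<-|Hg] Hev; last by exists g => //; right.
  exists (Ex v a); first by left.
  by exists (tv e t); apply/ev_subst.
- by move=> t e _; exists (Eq t t) => //; left.
- move=> G D v a s t Hs Ht _ IH e HG.
  case: (IH e HG) => g [<-|Hg] Hev; last by exists g => //; right; right.
  case: (eqVneq (tv e s) (tv e t)) => Est; last first.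
    by exists (Neq s t) => //=; [left | apply/eqP].
  exists (subst v s a); first by right; left.
  by apply/ev_subst => //; rewrite Est; apply/ev_subst.
- by move=> s e _; exists (Neq (Succ s) Zero) => //; left.
- move=> s t e H; exists (Eq s t); first by left.
  by have /= [] := H _ (or_introl erefl).
- by move=> s e _; exists (Eq (Plus s Zero) s) => //=; [left | rewrite addn0].
- by move=> s t e _; exists (Eq (Plus s (Succ t)) (Succ (Plus s t))) => //=; [left | rewrite addnS].
- by move=> s e _; exists (Eq (Mult s Zero) Zero) => //=; [left | rewrite muln0].
- by move=> s t e _; exists (Eq (Mult s (Succ t)) (Plus (Mult s t) s)) => //=; [left | rewrite mulnS addnC].
- move=> G D x a t Hnf Hf1 Hf2 _ IH e HG.
  apply: NNPP => ND.
  have HxG : forall g, List.In g G -> x \notin fv g.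
    move=> g Hg; apply: Hnf; apply: List.in_or_app; by left.
  have HxD : forall g, List.In g D -> x \notin fv g.
    move=> g Hg; apply: Hnf; apply: List.in_or_app; by right.
  have Hall : forall n, ev bT bP (upd e x n) a.
    elim=> [|n IHn].
      have := (ev_subst bT bP x Zero a e (free_for_closed x Zero a (erefl _))).1 (HG _ (or_introl erefl)).
      done.
    case: (IH (upd e x n)).
      move=> g [<-|Hg]; first exact: IHn.
      by apply: (nf_ev bT bP x n e g (HxG g Hg)).2; apply: HG; right.
    move=> g [<-|Hg] Hev.
      move/ev_subst: Hev => /(_ Hf1) /=.
      by apply: ev_eqf1 => z; rewrite /upd eqxx; case: eqP.
    by case: ND; exists g; [right | exact: (nf_ev bT bP x n e g (HxD g Hg)).1 Hev].
  apply: (ND); exists (subst x t a); first by left.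
  by apply/ev_subst => //; apply: Hall.
Qed.

Lemma tree_t_inj : injective tree_t.
Proof.
elim=> [n||s IH|a IHa b IHb|a IHa b IHb] [m||s'|a' b'|a' b'] //=.
- by case=> ->.
- by case=> /IH ->.
- by case=> /IHa -> /IHb ->.
- by case=> /IHa -> /IHb ->.
Qed.

Lemma tree_f_inj : injective tree_f.
Proof.
elim=> [a b|a b|t|t|t|t|a IHa b IHb|a IHa b IHb|v a IHa|v a IHa]
  [a' b'|a' b'|t'|t'|t'|t'|a' b'|a' b'|v' a'|v' a'] //=;
  try (by case=> /tree_t_inj -> /tree_t_inj ->);
  try (by case=> /tree_t_inj ->);
  try (by case=> /IHa -> /IHb ->);
  try (by case=> -> /IHa ->).
Qed.

Lemma code_inj : injective code.
Proof. by move=> f g /(pcan_inj pickleK) /tree_f_inj. Qed.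

Lemma val_num n : Defs.val (num n) = n.
Proof. by elim: n => [//|n IH]; move: IH; rewrite /num /= => ->. Qed.

Lemma not_bp_Pr t : ~ base_paradoxical (Pr t).
Proof.
move=> [_ [[H _] _]].
have := soundness True True _ _ H (fun _ => 0).
case; first by move=> f [<-|[]].
by move=> g [<-|[]] /=.
Qed.

Lemma not_bp_NPr t : ~ base_paradoxical (NPr t).
Proof.
move=> [_ [[H _] _]].
have := soundness True False _ _ H (fun _ => 0).
case; first by move=> f [<-|[]] /=.
by move=> g [<-|[]] /=.
Qed.

Lemma not_P_Gamma M u : (exists t, u = Pr t \/ u = NPr t) ->
  ~ base_paradoxical u -> ~ base_paradoxical (neg u) ->
  ~ Ppos (GammaStar M) (code u).
Proof.
move=> Hu Hb Hnb [f [_ [/code_inj Ef HP]]]; subst f.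
case: HP => [[f' [_ [_ [Bs|[y [[h [/code_inj Eh Ey] Bs]]]]]]]|].
- by case: Bs => g [/code_inj Eg]; subst g.
- subst h y; by case: Bs => g [/code_inj Eg]; subst g.
case: Hu => t [Eu|Eu]; subst u;
  (case=> [[t' [_ [/code_inj //]]]|];
   case=> [[t' [_ [/code_inj //]]]|];
   case=> [[a [b [_ [/code_inj //]]]]|];
   case=> [[a [b [_ [/code_inj //]]]]|];
   case=> [[v [a [_ [/code_inj //]]]]|];
   case=> [v [a [_ [/code_inj //]]]]).
Qed.

Lemma key A (lt : A -> A -> Prop) (S : A -> model) :
  well_order lt -> modified_sequence lt S ->
  forall a t, ~ Ppos (S a) (code (Pr t)) /\ ~ Ppos (S a) (code (NPr t)).
Proof.
move=> [wf _] [H0 [Hs Hl]] a.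
elim/(well_founded_ind wf): a => a IH t.
case: (classic (exists b, lt b a)) => [Hex|Hnex].
  case: (classic (exists b, lt b a /\ forall c, ~ (lt b c /\ lt c a))) => [[b [Hb Hc]]|Hnl].
    have [_ [_ [HP _]]] := Hs a b Hb Hc.
    split; move/HP; apply: not_P_Gamma.
    - by exists t; left.
    - exact: not_bp_Pr.
    - exact: not_bp_NPr.
    - by exists t; right.
    - exact: not_bp_NPr.
    - exact: not_bp_Pr.
  have Hlim : forall b, lt b a -> exists c, lt b c /\ lt c a.
    move=> b Hb; apply: NNPP => Hn; apply: Hnl; exists b; split => // c Hc.
    by apply: Hn; exists c.
  have [_ [_ [HP _]]] := Hl a Hex Hlim.
  split; move/HP => [b [Hb Hp]]; have [K1 K2] := IH b Hb t.
    exact: K1 Hp.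
  exact: K2 Hp.
have M0a : forall b, ~ lt b a by move=> b Hb; apply: Hnex; exists b.
have [_ [_ [HP _]]] := H0 a M0a.
by split; move/HP.
Qed.


Lemma sat_or_inv M x y : sat M (Or x y) -> sat M x \/ sat M y.
Proof. move=> H; inversion H; [left | right]; assumption. Qed.

Lemma sat_P_inv M t : sat M (Pr t) -> Ppos M (Defs.val t).
Proof. move=> H; inversion H; assumption. Qed.

Theorem mainTheorem13 :
  forall (A : Type) (lt : A -> A -> Prop) (S : A -> model),
    well_order lt -> modified_sequence lt S ->
    (forall (a : A) (t : term), closed_term t ->
       ~ sat (S a) (Or (Pr (gq (Pr t))) (Pr (gq (NPr t))))) /\
    (forall a : A, meq (GammaStar (S a)) (S a) ->
       forall n, P0neg n -> ~ Ppos (S a) n).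
Proof.
move=> A lt S Hw Hm; split.
  move=> a t _ Hsat.
  have [K1 K2] := key _ _ _ Hw Hm a t.
  case: (sat_or_inv _ _ _ Hsat) => /sat_P_inv; rewrite /gq val_num.
    exact: K1.
  exact: K2.
move=> a _ n [f ->].
exact: (key _ _ _ Hw Hm a (gq f)).1.
Qed.
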